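(* Let $n\ge 4$ and let $x,y\in PT_n$ be distinct pyramidal tours with codes $x^c,y^c\in\{0,1\}^{\{3,\dots,n-1\}}$. The vertices $x^v$ and $y^v$ of $\mathrm{PYR}(n)$ are not adjacent if and only if at least one of the following two conditions holds: (1) there exists $k$ with $3<k<n-2$ such that $x^c_k=y^c_k\neq x^c_{k+1}=y^c_{k+1}$, and there exist $i$ with $3\le i<k$ and $j$ with $k+1<j\le n-1$ such that $x^c_i\ne y^c_i$ and $x^c_j\neq y^c_j$; (2) there exists $k$ with $3\le k<n-2$ such that $x^c_k=y^c_{k+1}\neq x^c_{k+1}=y^c_k$, and there exists $j$ with $k+1<j\le n-1$ such that $x^c_j=y^c_j$.
   Context: Let $K_n$ be the complete undirected graph on vertex set $\{1,\dots,n\}$ with edge set $E$. A Hamiltonian cycle $\langle 1,i_1,\dots,i_r,n,j_1,\dots,j_{n-r-2}\rangle$ is called a pyramidal tour if $i_1<i_2<\dots<i_r$ and $j_1>j_2>\dots>j_{n-r-2}$ (the tour leaves city $1$, visits some cities in increasing order, reaches city $n$, and returns to $1$ visiting the remaining cities in decreasing order); tours are undirected. Let $PT_n$ be the set of all pyramidal tours. For $x\in PT_n$ its characteristic vector $x^v\in\mathbb{R}^E$ has $x^v_e=1$ if edge $e$ lies in $x$ and $0$ otherwise. The pyramidal tours polytope is $\mathrm{PYR}(n)=\operatorname{conv}\{x^v : x\in PT_n\}$. Every pyramidal tour contains the edge $\{1,2\}$; the tour is oriented so that vertex $2$ belongs to the increasing part. The code of $x$ is the $0/1$ vector $x^c=(x^c_3,\dots,x^c_{n-1})$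 with $x^c_i=1$ if vertex $i$ is visited in the increasing part of $x$ (between $1$ and $n$ when travelling $1\to 2\to\cdots$) and $x^c_i=0$ otherwise. The map $x\mapsto x^c$ is a bijection from $PT_n$ onto $\{0,1\}^{n-3}$. *)

(* Defs.v *)
(* Cities are the natural numbers 1..n. *)
From HB Require Import structures.
From mathcomp Require Import all_boot all_order all_algebra.
Set Implicit Arguments. Unset Strict Implicit. Unset Printing Implicit Defensive.
Import Order.TTheory GRing.Theory Num.Theory.

(* A Hamiltonian cycle of K_n is written as a sequence s listing every city
   exactly once, the cycle closing from the last element back to the first. *)
Definition pyramidal (n : nat) (s : seq nat) : Prop :=
  perm_eq s (iota 1 n) /\
  exists l1 l2 : seq nat,
    s = 1 :: l1 ++ n :: l2 /\ sorted ltn l1 /\ sorted gtn l2.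

(* The edge set E of K_n: unordered pairs {i,j}, encoded as (i,j) with 1 <= i < j <= n. *)
Definition Epairs (n : nat) : seq (nat * nat) :=
  [seq p <- [seq (i, j) | i <- iota 1 n, j <- iota 1 n] | p.1 < p.2].

Definition tour_edges (s : seq nat) : seq (nat * nat) :=
  [seq (minn p.1 p.2, maxn p.1 p.2) | p <- zip s (rot 1 s)].

Definition charvec (R : numDomainType) (s : seq nat) (e : nat * nat) : R :=
  ((e \in tour_edges s) : nat)%:R.

Definition dot (R : numDomainType) (n : nat) (c : nat * nat -> R) (s : seq nat) : R :=
  (\sum_(e <- Epairs n) c e * charvec R s e)%R.

(* Two cycles are the same (undirected) tour iff they have the same characteristic vector. *)
Definition same_tour (n : nat) (s t : seq nat) : Prop :=
  forall e, e \in Epairs n -> (e \in tour_edges s) = (e \in tour_edges t).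

(* Adjacency of the vertices x^v, y^v of PYR(n) = conv{ z^v : z in PT_n }:
   conv{x^v, y^v} is a face, i.e. some linear functional c attains its maximum
   over PYR(n) exactly at x^v and y^v (among the vertices z^v). *)
Definition pyr_adjacent (R : realFieldType) (n : nat) (x y : seq nat) : Prop :=
  exists c : nat * nat -> R,
    dot n c x = dot n c y /\
    forall z, pyramidal n z -> ~ same_tour n z x -> ~ same_tour n z y ->
      (dot n c z < dot n c x)%R.

(* Increasing part (the cities strictly between 1 and n when reading s). *)
Definition inc_part (n : nat) (s : seq nat) : seq nat :=
  take (index n (behead s)) (behead s).

(* The code x^c: for a city i, true iff i lies on the same side of the cycle
   as city 2 (i.e. in the increasing part once the tour is oriented so that
   2 belongs to the increasing part). *)
Definition code (n : nat) (s : seq nat) (i : nat) : bool :=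
  (i \in inc_part n s) == (2 \in inc_part n s).

(* Main.v *)
Require Import Defs.
From HB Require Import structures.
From mathcomp Require Import all_boot all_order all_algebra.
From mathcomp Require Import zify lra.
From Stdlib Require Import Classical_Prop.
Set Implicit Arguments. Unset Strict Implicit. Unset Printing Implicit Defensive.
Import Order.TTheory GRing.Theory Num.Theory.

Definition nx (f : nat -> bool) (n i : nat) : nat :=
  i.+1 + find (fun j => f j == f i) (iota i.+1 (n - i.+1)).

Lemma nx_gt f n i : i < nx f n i.
Proof. by rewrite /nx; lia. Qed.

Lemma nx_le f n i : i < n -> nx f n i <= n.
Proof.
move=> hi; rewrite /nx.
have := find_size (fun j => f j == f i) (iota i.+1 (n - i.+1)).
rewrite size_iota; lia.
Qed.

Lemma nx_before f n i j : i < j < nx f n i -> f j != f i.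
Proof.
case/andP=> h1 h2; rewrite /nx in h2.
set s := iota i.+1 (n - i.+1) in h2.
have ht : j - i.+1 < find (fun j => f j == f i) s by lia.
have := before_find 0 ht.
have hs : j - i.+1 < size s.
  by have := find_size (fun j => f j == f i) s; lia.
rewrite nth_iota; last by rewrite size_iota in hs.
have -> : i.+1 + (j - i.+1) = j by lia.
by move/negbT.
Qed.

Lemma nx_at f n i : nx f n i < n -> f (nx f n i) = f i.
Proof.
rewrite /nx; set s := iota i.+1 (n - i.+1) => h.
have hs : find (fun j => f j == f i) s < size s by rewrite size_iota; lia.
have hh : has (fun j => f j == f i) s by rewrite has_find.
have := nth_find 0 hh.
rewrite nth_iota; last by rewrite size_iota in hs.
by move/eqP.
Qed.

Lemma nx_unique f n i m : i < n -> i < m <= n ->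
  (forall j, i < j < m -> f j != f i) -> (m < n -> f m = f i) -> nx f n i = m.
Proof.
move=> hin /andP[h1 h2] hb ha.
case: (ltngtP m (nx f n i)) => // h.
- have := @nx_before f n i m; rewrite h1 h => /(_ erefl).
  by rewrite ha ?eqxx //; have := nx_le f hin; lia.
- have hl : nx f n i < n by lia.
  have := hb (nx f n i); rewrite nx_gt h => /(_ erefl).
  by rewrite nx_at // eqxx.
Qed.

Lemma xorb_eqE (a b d : bool) : (a (+) d == b (+) d) = (a == b).
Proof. by case: a; case: b; case: d. Qed.

Lemma nx_ext f g n i d : i < n -> (forall j, i <= j < n -> g j = f j (+) d) ->
  nx g n i = nx f n i.
Proof.
move=> hin hg; have hle := nx_le f hin; have hgt := nx_gt f n i.
have gi : g i = f i (+) d by apply: hg; rewrite leqnn hin.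
apply: nx_unique => //.
- by rewrite hgt hle.
- move=> j hj; have gj : g j = f j (+) d by apply: hg; lia.
  by rewrite gj gi xorb_eqE; exact: (nx_before hj).
- move=> hl; have gj : g (nx f n i) = f (nx f n i) (+) d by apply: hg; lia.
  by rewrite gj gi nx_at.
Qed.

Lemma nx_ext_loc f g n i m : i < n -> nx f n i <= m ->
  (forall j, i <= j <= m -> j < n -> g j = f j) -> nx g n i = nx f n i.
Proof.
move=> hin hm hg; have hle := nx_le f hin; have hgt := nx_gt f n i.
have gi : g i = f i by apply: hg => //; lia.
apply: nx_unique => //.
- by rewrite hgt hle.
- move=> j hj; have gj : g j = f j by apply: hg; lia.
  by rewrite gj gi; exact: (nx_before hj).
- move=> hl; have gj : g (nx f n i) = f (nx f n i) by apply: hg; lia.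
  by rewrite gj gi nx_at.
Qed.

Lemma nx_succ f n i : i.+1 < n -> (nx f n i == i.+1) = (f i.+1 == f i).
Proof.
move=> hn; case: eqP => h.
- by have := @nx_at f n i; rewrite h => ->; rewrite // eqxx.
- apply/esym/negbTE/eqP => e; apply: h; apply: nx_unique => //; try lia.
Qed.

Definition splice (f g : nat -> bool) k := fun j => if j <= k then f j else g j (+) (f k (+) g k).

Lemma nx_splice f g n k i : k.+1 < n -> f k != f k.+1 -> g k != g k.+1 -> i < n ->
  nx (splice f g k) n i = if i < k then nx f n i else nx g n i.
Proof.
move=> hk hf hg hi; case: ltnP => hik.
- have hb : nx f n i <= k.+1.
    rewrite leqNgt; apply/negP => hlt.
    have h1 : f k != f i by apply: (@nx_before f n); apply/andP; split; lia.
    have h2 : f k.+1 != f i by apply: (@nx_before f n); apply/andP; split; lia.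
    by move: hf h1 h2; case: (f k); case: (f k.+1); case: (f i).
  apply: nx_ext_loc hb _ => // j hj _; rewrite /splice.
  case: leqP => // hjk; have -> : j = k.+1 by lia.
  by move: hf hg; case: (f k); case: (f k.+1); case: (g k); case: (g k.+1).
- apply: (@nx_ext g _ n i (f k (+) g k)) => // j hj; rewrite /splice.
  case: leqP => // hjk; have -> : j = k by lia.
  by case: (f k); case: (g k).
Qed.

Ltac lia2 := repeat match goal with
  | H : ?T |- _ => lazymatch T with
       | is_true (leq _ _) => fail
       | is_true (andb (leq _ _) (leq _ _)) => fail
       | is_true (~~ (leq _ _)) => fail
       | @eq nat _ _ => fail
       | _ => clear H
     end
  end; lia.

Ltac lia' := repeat match goal with
  | H : is_true (_ != _) |- _ => clear H
  | H : is_true (~~ _) |- _ => clear H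
  | H : @eq bool _ _ |- _ => clear H
  | H : is_true (has _ _) |- _ => clear H
  end; lia.

Lemma core_half n f g h a b :
  (forall i, 0 < i -> i.+1 < n -> nx h n i = nx f n i \/ nx h n i = nx g n i) ->
  g 1 != g 2 -> h 1 = g 1 -> h 2 = g 2 ->
  0 < a -> h a != f a -> (forall i, 0 < i < a -> h i = f i) ->
  b < n -> h b != g b -> (forall i, 0 < i < b -> h i = g i) -> a < b ->
  exists k, [/\ 0 < k, k.+1 < n, f k != f k.+1 & g k != g k.+1] /\
     (exists2 i, 0 < i <= k & f i != g i) /\
     (exists2 j, k < j < n & f j (+) g j != f k.+1 (+) g k.+1).
Proof.
move=> Hnx g12 h1 h2 a0 ha hfa bn hb hgb ab.
have b3 : 2 < b.
  case: (ltnP 2 b) => // hb2; have : b = 2 by lia'.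
  by move=> e; move: hb; rewrite e h2 eqxx.
pose P k := (k < b.-1) && (g k != g k.+1).
have exP : exists k, P k by exists 1; rewrite /P g12 andbT; lia'.
have ubP : forall k, P k -> k <= b by move=> k /andP[hk _]; lia'.
case: (ex_maxnP exP ubP) => k /andP[hkb hgk] hmax.
have k1 : 0 < k by apply: hmax; rewrite /P g12 andbT; lia'.
have gc : forall t, k.+1 + t < b -> g (k.+1 + t) = g k.+1.
  elim=> [|t IH] ht; first by rewrite addn0.
  have hP : ~~ P (k.+1 + t).
    by apply/negP => /hmax; lia'.
  move: hP; rewrite /P; have -> : k.+1 + t < b.-1 by lia'.
  rewrite /= negbK => /eqP e; rewrite addnS -e IH //; lia'.
have gne : forall j, k < j < b -> g j != g k.
  move=> j hj; have -> : j = k.+1 + (j - k.+1) by lia'.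
  by rewrite gc; [rewrite eq_sym | lia'].
have hne : forall j, k < j < b -> h j != h k.
  by move=> j hj; rewrite !hgb; [exact: gne | lia' | lia'].
have hkg : h k = g k by apply: hgb; lia'.
have nxg : b <= nx g n k.
  rewrite leqNgt; apply/negP => hl.
  have := @nx_at g n k; rewrite (ltn_trans hl bn) => /(_ erefl) e.
  by have := gne (nx g n k); rewrite e eqxx nx_gt hl => /(_ erefl).
have nxh : b <= nx h n k.
  rewrite leqNgt; apply/negP => hl.
  have := @nx_at h n k; rewrite (ltn_trans hl bn) => /(_ erefl) e.
  by have := hne (nx h n k); rewrite e eqxx nx_gt hl => /(_ erefl).
have nhg : nx h n k != nx g n k.
  apply/eqP => e.
  have [hbm|hbm] : b = nx g n k \/ b < nx g n k by lia'.
  - have := @nx_at g n k; rewrite -hbm bn => /(_ erefl) eg.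
    have := @nx_at h n k; rewrite e -hbm bn => /(_ erefl) eh.
    by move: hb; rewrite eg eh hkg eqxx.
  - have e1 : g b != g k by apply: (@nx_before g n); lia'.
    have e2 : h b != h k by apply: (@nx_before h n); rewrite e; lia'.
    by move: hb e1 e2; rewrite hkg; case: (h b); case: (g b); case: (g k).
have nhf : nx h n k = nx f n k.
  have : k.+1 < n by lia'.
  by case/(Hnx k k1) => // e; move: nhg; rewrite e eqxx.
have ak : a <= k.
  rewrite leqNgt; apply/negP => hka.
  have hkf : h k = f k by apply: hfa; lia'.
  have e1 : f a != f k by apply: (@nx_before f n); rewrite -nhf; lia'.
  have e2 : h a != h k by apply: (@nx_before h n); lia'.
  by move: ha e1 e2; rewrite hkf; case: (h a); case: (f a); case: (f k).
have fk : f k != f k.+1.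
  rewrite eq_sym; apply: (@nx_before f n); rewrite -nhf; lia'.
exists k; split; first by split => //; lia'.
split.
- exists a; first lia'.
  rewrite -hgb; [by rewrite eq_sym | lia'].
- set d := f k.+1 (+) g k.+1.
  case: (boolP (has (fun j => f j (+) g j != d) (iota k.+1 (n - k.+1)))).
  + case/hasP => j; rewrite mem_iota => hj hd; exists j => //; lia'.
  + move/hasPn => hall; exfalso; move: nhg; rewrite nhf.
    rewrite (@nx_ext g f n k d); first by rewrite eqxx.
    * lia'.
    * move=> j hj; case: (ltngtP j k) => hjk; first lia'.
      - have := hall j; rewrite mem_iota; have -> : k.+1 <= j < k.+1 + (n - k.+1) by lia'.
        move/(_ erefl); rewrite negbK => /eqP <-.
        by case: (f j); case: (g j).
      - rewrite hjk /d; move: fk hgk; case: (f k); case: (f k.+1); case: (g k); case: (g k.+1) => //.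
Qed.

Lemma core n f g h :
  (forall i, 0 < i -> i.+1 < n -> nx h n i = nx f n i \/ nx h n i = nx g n i) ->
  f 1 = false -> f 2 = true -> g 1 = false -> g 2 = true -> h 1 = false -> h 2 = true ->
  (exists2 i, 0 < i < n & h i != f i) -> (exists2 i, 0 < i < n & h i != g i) ->
  exists k, [/\ 0 < k, k.+1 < n, f k != f k.+1 & g k != g k.+1] /\
     (exists2 i, 0 < i <= k & f i != g i) /\
     (exists2 j, k < j < n & f j (+) g j != f k.+1 (+) g k.+1).
Proof.
move=> Hnx f1 f2 g1 g2 h1 h2 [i0 hi0 hf0] [i1 hi1 hg1].
have exA : exists i, (0 < i < n) && (h i != f i) by exists i0; rewrite hi0 hf0.
have exB : exists i, (0 < i < n) && (h i != g i) by exists i1; rewrite hi1 hg1.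
case: (ex_minnP exA) => a /andP[ha hfa] amin.
case: (ex_minnP exB) => b /andP[hb hgb] bmin.
have fa : forall i, 0 < i < a -> h i = f i.
  move=> i hi; apply/eqP; apply: contraTT hi => hne.
  have := amin i; rewrite hne andbT => hh.
  have : 0 < i < n -> a <= i by move=> H; apply: hh; rewrite H.
  by move: ha; clear; lia.
have gb : forall i, 0 < i < b -> h i = g i.
  move=> i hi; apply/eqP; apply: contraTT hi => hne.
  have := bmin i; rewrite hne andbT => hh.
  have : 0 < i < n -> b <= i by move=> H; apply: hh; rewrite H.
  by move: hb; clear; lia.
case: (ltngtP a b) => hab.
- apply: (@core_half n f g h a b) => //; try lia'.
  by rewrite g1 g2.
  by rewrite h1 g1.
  by rewrite h2 g2.
- have [k [[k0 kn fk gk] [[i hi fgi] [j hj fgj]]]] :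
    exists k, [/\ 0 < k, k.+1 < n, g k != g k.+1 & f k != f k.+1] /\
     (exists2 i, 0 < i <= k & g i != f i) /\
     (exists2 j, k < j < n & g j (+) f j != g k.+1 (+) f k.+1).
    apply: (@core_half n g f h b a) => //; try lia'.
    by move=> i2 i3 hi; case: (Hnx i2 i3 hi); [right|left].
    by rewrite f1 f2.
    by rewrite h1 f1.
    by rewrite h2 f2.
  exists k; split; first by split.
  split; first by exists i; rewrite // eq_sym.
  by exists j; rewrite // addbC [f k.+1 (+) _]addbC.
- exfalso; subst b.
  have a3 : 2 < a.
    case: (ltnP 2 a) => // a2.
    have [e|e] : a = 1 \/ a = 2 by lia'.
    + by move: hfa; rewrite e h1 f1.
    + by move: hfa; rewrite e h2 f2.
  have hf : h a.-1 = f a.-1 by apply: fa; lia'.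
  have hg : h a.-1 = g a.-1 by apply: gb; lia'.
  have sa : a.-1.+1 = a by lia'.
  have an : a.-1.+1 < n by rewrite sa; lia'.
  have e1 := @nx_succ h n a.-1 an; have e2 := @nx_succ f n a.-1 an;
  have e3 := @nx_succ g n a.-1 an.
  rewrite sa in e1 e2 e3.
  case: (Hnx a.-1 _ an) => [|e|e]; first lia'.
  + by move: e1 e2 hfa; rewrite e hf => ->; case: (h a); case: (f a); case: (f a.-1).
  + by move: e1 e3 hgb; rewrite e hg => ->; case: (h a); case: (g a); case: (g a.-1).
Qed.

Fixpoint cpairs (x : nat) (r : seq nat) : seq (nat * nat) :=
  if r is y :: r' then (x, y) :: cpairs y r' else [::].

Lemma zip_cp x r y : zip (x :: r) (rcons r y) = cpairs x (rcons r y).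
Proof. by elim: r x => [|z r IH] x //=; rewrite IH. Qed.

Lemma cpairsP (r : rel nat) x s u v : irreflexive r -> transitive r -> path r x s ->
  ((u, v) \in cpairs x s) =
  [&& u \in x :: s, v \in x :: s, r u v & ~~ has (fun w => r u w && r w v) (x :: s)].
Proof.
move=> irr tr; elim: s x => [|y s IH] x /=.
- move=> _; rewrite in_nil !mem_seq1; symmetry.
  case: eqP => [->|] //=; case: eqP => [->|] //=; by rewrite irr.
- case/andP => rxy hp; rewrite in_cons IH //.
  have ay : all (r y) s by exact: order_path_min hp.
  have ax : all (r x) (y :: s) by apply: order_path_min => //=; rewrite rxy.
  apply/idP/idP.
  + case/orP => [/eqP [-> ->] | /and4P [hu hv ruv hn]].
    * rewrite !in_cons !eqxx /= orbT rxy /= !irr /=.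
      apply/hasPn => w hw; apply/negP => /andP[_ rwy].
      by have := allP ay w hw => ryw; have := tr _ _ _ ryw rwy; rewrite irr.
    * rewrite in_cons hu orbT in_cons hv orbT ruv /=.
      move: hn => /= hn; rewrite negb_or hn andbT; apply/negP => /andP[rux _].
      by have := tr _ _ _ rux (allP ax u hu); rewrite irr.
  + case/and4P => hu hv ruv hn.
    move: hu; rewrite in_cons; case: eqP => [eu|nu] /= hu.
    * subst u; move: hv; rewrite in_cons; case: eqP => [ev|_] /=.
        by subst v; rewrite irr in ruv.
      rewrite in_cons; case: eqP => [-> _|_ /= hvs]; first by rewrite eqxx.
      exfalso; move: hn => /=; rewrite irr /= rxy /=.
      by rewrite (allP ay v hvs).
    * apply/orP; right; rewrite hu ruv /=.
      have -> /= : v \in y :: s.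
        move: hv; rewrite in_cons; case: eqP => [ev|] //= _.
        by subst v; have := tr _ _ _ ruv (allP ax u hu); rewrite irr.
      by move: hn => /=; rewrite negb_or => /andP[_ ->].
Qed.

Definition cons (P : nat -> bool) p q := [/\ P p, P q & forall w, p < w < q -> ~~ P w].

Lemma cons_nx n (P Q b : nat -> bool) p q :
  P 1 -> P n -> Q 1 -> Q n -> P 2 -> (forall w, 1 < w < n -> P w = ~~ Q w) ->
  b 1 = false -> (forall w, 1 < w < n -> b w = P w) -> 2 < n ->
  0 < p < q -> q <= n ->
  (cons P p q \/ cons Q p q) <-> ((p = 1 /\ q = 2) \/ q = nx b n p).
Proof.
move=> P1 Pn Q1 Qn P2 PQ b1 bP n2 hpq hqn; split.
- case=> [[Pp Pq Pb]|[Qp Qq Qb]].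
  + case: (ltnP 1 p) => hp.
    * right; have bp : b p = true by rewrite bP ?Pp //; lia'.
      symmetry; apply: nx_unique; try lia'.
      - move=> j hj; rewrite bp bP; last lia'; by rewrite eqb_id; apply: Pb.
      - by move=> hq; rewrite bp bP ?Pq //; lia'.
    * left; have p1 : p = 1 by lia'.
      split => //; subst p; case: (ltnP 2 q) => hq; last lia'.
      by have := Pb 2; rewrite P2 hq => /(_ erefl).
  + right; have bp : b p = false.
      case: (ltnP 1 p) => hp; last by have -> : p = 1 by lia'.
      by rewrite bP ?PQ ?Qp //; lia'.
    symmetry; apply: nx_unique; try lia'.
    * move=> j hj; rewrite bp bP; last lia'; rewrite PQ; last lia'.
      by rewrite eqbF_neg negbK; apply: Qb; lia'.
    * by move=> hq; rewrite bp bP ?PQ ?Qq //; lia'.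
- case=> [[-> ->]|e].
  + by left; split => // w; lia'.
  + have hpn : p < n by lia'.
    case: (boolP (b p)) => bp.
    * left; have hp : 1 < p.
        case: (ltnP 1 p) => // h; have e1 : p = 1 by lia'.
        by move: bp; rewrite e1 b1.
      split.
      - by rewrite -bP //; lia'.
      - case: (ltnP q n) => hq; last by have -> : q = n by lia'.
        rewrite -bP; last lia'. by rewrite e nx_at -?e // bp.
      - move=> w hw; rewrite -bP; last lia'.
        have h := @nx_before b n p w; rewrite -e hw in h.
        by have := h erefl; rewrite bp eqb_id.
    * right; split.
      - case: (ltnP 1 p) => hp; last by have -> : p = 1 by lia'.
        by move: bp; rewrite bP ?PQ ?negbK //; lia'.
      - case: (ltnP q n) => hq; last by have -> : q = n by lia'.
        have : b q = b p by rewrite e nx_at -?e.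
        by rewrite (negbTE bp) bP ?PQ; try lia'; case: (Q q).
      - move=> w hw; have h := @nx_before b n p w; rewrite -e hw in h.
        have := h erefl; rewrite (negbTE bp) eqbF_neg negbK.
        by rewrite bP ?PQ ?negbK //; lia'.
Qed.

Lemma mem_tour_edges s p q : p < q ->
  ((p,q) \in tour_edges s) = ((p,q) \in zip s (rot 1 s)) || ((q,p) \in zip s (rot 1 s)).
Proof.
move=> hpq; apply/mapP/orP.
- case=> [[u v]] huv /= [e1 e2].
  case: (leqP u v) => huv'.
  + left; move: e1 e2; rewrite (minn_idPl huv') (maxn_idPr huv') => -> -> //.
  + right; move: e1 e2; rewrite (minn_idPr (ltnW huv')) (maxn_idPl (ltnW huv')) => -> -> //.
- case=> h; [exists (p,q) | exists (q,p)] => //=.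
  + by rewrite (minn_idPl (ltnW hpq)) (maxn_idPr (ltnW hpq)).
  + by rewrite (minn_idPr (ltnW hpq)) (maxn_idPl (ltnW hpq)).
Qed.

Lemma cons_hasE (L : seq nat) p q : p < q ->
  [&& p \in L, q \in L, p < q & ~~ has (fun w => (p < w) && (w < q)) L] <-> cons (fun w => w \in L) p q.
Proof.
move=> hpq; split.
- case/and4P => hp hq _ /hasPn hn; split => // w hw; apply/negP => hwL.
  by have := hn w hwL; rewrite hw.
- case=> hp hq hn; rewrite hp hq hpq /=; apply/hasPn => w hw; apply/negP => hw'.
  by have := hn w hw'; rewrite hw.
Qed.

Lemma cons_hasE' (L : seq nat) p q : p < q ->
  [&& q \in L, p \in L, gtn q p & ~~ has (fun w => gtn q w && gtn w p) L] <-> cons (fun w => w \in L) p q.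
Proof.
move=> hpq; rewrite -(cons_hasE L hpq) /= hpq andbA [(q \in L) && _]andbC -andbA.
have -> : has (fun w => (w < q) && (p < w)) L = has (fun w => (p < w) && (w < q)) L.
  by apply: eq_has => w; rewrite andbC.
by [].
Qed.

Definition bit n s i := if i == 1 then false else code n s i.

Lemma edges_char n s p q : 2 < n -> pyramidal n s -> 0 < p < q -> q <= n ->
  ((p,q) \in tour_edges s) <-> ((p = 1 /\ q = 2) \/ q = nx (bit n s) n p).
Proof.
move=> n2 [hperm [l1 [l2 [es [s1 s2]]]]] hpq hqn.
have U : uniq s by rewrite (perm_uniq hperm) iota_uniq.
have M : forall w, (w \in s) = (0 < w <= n).
  by move=> w; rewrite (perm_mem hperm) mem_iota; lia2.
rewrite es in U M.
move: U; rewrite cons_uniq mem_cat negb_or in_cons negb_or => /andP[/and3P[n1l1 n1 n1l2]].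
rewrite cat_uniq => /and3P[_ /hasPn hd /= /andP[nl2 _]].
have nl1 : n \notin l1 by apply/negP => h; have := hd n; rewrite in_cons eqxx h => /(_ erefl).
have L1 : forall w, w \in l1 -> 1 < w < n.
  move=> w hw; have := M w; rewrite in_cons mem_cat hw orbT /= => /esym hm.
  have w1 : w != 1 by apply/eqP => e; move: n1l1; rewrite -e hw.
  have wn : w != n by apply/eqP => e; move: nl1; rewrite -e hw.
  by move: hm w1 wn; clear; lia2.
have L2 : forall w, w \in l2 -> 1 < w < n.
  move=> w hw; have := M w; rewrite in_cons mem_cat in_cons hw !orbT /= => /esym hm.
  have w1 : w != 1 by apply/eqP => e; move: n1l2; rewrite -e hw.
  have wn : w != n by apply/eqP => e; move: nl2; rewrite -e hw.
  by move: hm w1 wn; clear; lia2.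
have D : forall w, 1 < w < n -> (w \in l1) = ~~ (w \in l2).
  move=> w hw; have := M w; rewrite in_cons mem_cat in_cons.
  have -> : (w == 1) = false by apply/eqP => e; move: hw; rewrite e.
  have -> : (w == n) = false by apply/eqP => e; move: hw; rewrite e; lia2.
  have -> : 0 < w <= n by lia2.
  move=> /= h; case: (boolP (w \in l2)) => h2 /=.
  - apply/negbTE/negP => h1; have := hd w; rewrite in_cons h2 orbT => /(_ erefl).
    by rewrite h1.
  - by move: h; rewrite (negbTE h2) orbF.
have pA : path ltn 1 (rcons l1 n).
  rewrite rcons_path (path_sortedE ltn_trans) s1 andbT; apply/andP; split.
  + by apply/allP => w /L1; lia2.
  + by have := mem_last 1 l1; rewrite in_cons => /orP[/eqP->|/L1]; rewrite /ltn /=; lia2.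
have tg : transitive gtn by move=> y x z /= h1 h2; exact: ltn_trans h2 h1.
have pB : path gtn n (rcons l2 1).
  rewrite rcons_path (path_sortedE tg) s2 andbT; apply/andP; split.
  + by apply/allP => w /L2 /=; lia2.
  + by have := mem_last n l2; rewrite in_cons => /orP[/eqP->|/L2] /=; lia2.
have Z : zip s (rot 1 s) = cpairs 1 (rcons l1 n) ++ cpairs n (rcons l2 1).
  have e1 : 1 :: l1 ++ n :: l2 = (1 :: l1) ++ (n :: l2) by [].
  have e2 : rot 1 (1 :: l1 ++ n :: l2) = rcons l1 n ++ rcons l2 1.
    by rewrite rot1_cons rcons_cat rcons_cons cat_rcons.
  by rewrite es e2 e1 zip_cat ?size_rcons // !zip_cp.
have irr : irreflexive ltn by move=> x; exact: ltnn.
have irr' : irreflexive gtn by move=> x; exact: ltnn.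
have hqp : (q < p) = false by lia2.
rewrite mem_tour_edges; last lia2.
rewrite Z !mem_cat !(cpairsP _ _ irr ltn_trans pA) !(cpairsP _ _ irr' tg pB).
rewrite /= hqp !andFb !andbF /= orbF.
have hpq' : p < q by lia2.
have inc : inc_part n s = l1.
  rewrite es /inc_part /= index_cat (negbTE nl1) /= eqxx addn0.
  by rewrite take_size_cat.
have code1 : forall w, 1 < w < n -> bit n s w = ((w \in l1) == (2 \in l1)).
  move=> w hw; rewrite /bit /code inc.
  by have -> : (w == 1) = false by apply/eqP => e; move: hw; rewrite e.
set A := 1 :: rcons l1 n; set B := n :: rcons l2 1.
have memA : forall w, 1 < w < n -> (w \in A) = (w \in l1).
  move=> w hw; rewrite /A in_cons mem_rcons in_cons.
  have -> : (w == 1) = false by apply/eqP => e; move: hw; rewrite e.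
  by have -> : (w == n) = false by apply/eqP => e; move: hw; rewrite e; lia2.
have memB : forall w, 1 < w < n -> (w \in B) = (w \in l2).
  move=> w hw; rewrite /B in_cons mem_rcons in_cons.
  have -> : (w == 1) = false by apply/eqP => e; move: hw; rewrite e.
  by have -> : (w == n) = false by apply/eqP => e; move: hw; rewrite e; lia2.
have A1 : 1 \in A by rewrite /A mem_head.
have An : n \in A by rewrite /A in_cons mem_rcons mem_head orbT.
have B1 : 1 \in B by rewrite /B in_cons mem_rcons mem_head orbT.
have Bn : n \in B by rewrite /B mem_head.
have b1 : bit n s 1 = false by [].
have two : 1 < 2 < n by lia2.
have X : [&& p \in A, q \in A, p < q
         & ~~ has (fun w : nat => (p < w) && (w < q)) A]
      || [&& q \in B, p \in B, p < q & ~~ has (fun w : nat => (w < q) && (p < w)) B]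
      <-> (cons (fun w => w \in A) p q \/ cons (fun w => w \in B) p q).
  split.
  + case/orP => [/(cons_hasE _ hpq') | h]; [by left | right].
    by apply/(cons_hasE' _ hpq').
  + case => [/(cons_hasE _ hpq') -> // | /(cons_hasE' _ hpq') h].
    by apply/orP; right.
rewrite X.
case: (boolP (2 \in l1)) => h2.
- apply: (@cons_nx n (fun w => w \in A) (fun w => w \in B)) => //; try lia2.
  + by rewrite memA.
  + by move=> w hw; rewrite memA // memB // D.
  + by move=> w hw; rewrite code1 // h2 eqb_id memA.
- have X2 : (cons (fun w => w \in A) p q \/ cons (fun w => w \in B) p q) <->
            (cons (fun w => w \in B) p q \/ cons (fun w => w \in A) p q) by tauto.
  rewrite X2.
  apply: (@cons_nx n (fun w => w \in B) (fun w => w \in A)) => //; try lia2.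
  + by rewrite memB // -[_ \in l2]negbK -D // h2.
  + by move=> w hw; rewrite memA // memB // D // negbK.
  + by move=> w hw; rewrite code1 // (negbTE h2) eqbF_neg memB // D // negbK.
Qed.

Lemma exists_tour n (P : nat -> bool) : 2 < n -> P 2 ->
  exists s, pyramidal n s /\ forall w, 1 < w < n -> code n s w = P w.
Proof.
move=> n2 P2.
set I := iota 2 (n - 2).
set l1 := filter P I; set l2 := rev (filter (predC P) I).
have memI : forall w, (w \in I) = (1 < w < n) by move=> w; rewrite mem_iota; lia2.
have nl1 : n \notin l1 by rewrite mem_filter memI ltnn !andbF.
exists (1 :: l1 ++ n :: l2); split.
- split.
  + have -> : iota 1 n = 1 :: (I ++ [:: n]).
      rewrite /I; have [m ->] : exists m, n = m.+3 by exists (n - 3); lia2.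
      rewrite (_ : m.+3 - 2 = m.+1); last lia2.
      have -> : iota 1 m.+3 = 1 :: iota 2 (m.+1 + 1) by rewrite addn1.
      by rewrite iotaD add2n.
    rewrite perm_cons -cat1s perm_catCA perm_sym perm_catC /= perm_cons.
    rewrite perm_sym /l2; apply: perm_trans (permEl (perm_filterC P I)).
    by rewrite perm_cat2l perm_rev.
  + exists l1, l2; split => //; split.
    * by apply: sorted_filter; [exact: ltn_trans | exact: iota_ltn_sorted].
    * rewrite /l2 rev_sorted.
      have -> : (fun z => gtn^~ z) = ltn by [].
      by apply: sorted_filter; [exact: ltn_trans | exact: iota_ltn_sorted].
- have inc : inc_part n (1 :: l1 ++ n :: l2) = l1.
    rewrite /inc_part /= index_cat (negbTE nl1) /= eqxx addn0.
    by rewrite take_size_cat.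
  move=> w hw; rewrite /code inc !mem_filter P2 !memI hw.
  have -> : [&& true, 1 < 2 & 2 < n] by lia2.
  by rewrite andbT eqb_id.
Qed.

Lemma mem_Epairs n (e : nat * nat) : (e \in Epairs n) = [&& 0 < e.1, e.1 < e.2 & e.2 <= n].
Proof.
case: e => p q; rewrite /Epairs mem_filter /=.
case: (ltnP p q) => hpq /=; last by rewrite !andbF.
apply/allpairsP/idP.
- by case=> [[a b]] /= [ha hb [-> ->]]; move: ha hb; rewrite !mem_iota; lia2.
- move=> h; exists (p, q); rewrite /= !mem_iota; split => //; lia2.
Qed.

Lemma iff_eqb (b1 b2 : bool) : (b1 <-> b2) -> b1 = b2.
Proof. by move=> [h1 h2]; apply/idP/idP. Qed.

Lemma bit1 n s : bit n s 1 = false. Proof. by []. Qed.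
Lemma bit2 n s : bit n s 2 = true. Proof. by rewrite /bit /code eqxx. Qed.

Lemma bits_same n x y : 2 < n -> pyramidal n x -> pyramidal n y ->
  (forall i, 0 < i < n -> bit n x i = bit n y i) -> same_tour n x y.
Proof.
move=> n2 px py hb [p q]; rewrite mem_Epairs /= => /and3P[hp hpq hqn].
have E : nx (bit n x) n p = nx (bit n y) n p.
  apply: (@nx_ext (bit n y) (bit n x) n p false); first lia2.
  by move=> j hj; rewrite addbF hb //; lia2.
have hpq' : 0 < p < q by lia2.
apply: iff_eqb; split.
- move/(edges_char n2 px hpq' hqn) => h; apply/(edges_char n2 py hpq' hqn).
  by rewrite -E.
- move/(edges_char n2 py hpq' hqn) => h; apply/(edges_char n2 px hpq' hqn).
  by rewrite E.
Qed.

Lemma same_bits n x y : 2 < n -> pyramidal n x -> pyramidal n y ->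
  same_tour n x y -> forall i, 0 < i < n -> bit n x i = bit n y i.
Proof.
move=> n2 px py hs; elim=> [|i IH] hi; first lia2.
case: (posnP i) => [->|i0]; first by rewrite !bit1.
case: (eqVneq i 1) => [->|i1]; first by rewrite !bit2.
have hx := IH (ltac:(lia2)).
have hpq : 0 < i < i.+1 by lia2.
have hqn : i.+1 <= n by lia2.
have e := hs (i, i.+1); rewrite mem_Epairs /= in e.
have {}e := e (ltac:(lia2)).
have ex : ((i, i.+1) \in tour_edges x) = (nx (bit n x) n i == i.+1).
  apply: iff_eqb; rewrite (edges_char n2 px hpq hqn); split.
  - by case=> [[e1 _]|->]; [move: i1; rewrite e1 | rewrite eqxx].
  - by move/eqP => ->; right.
have ey : ((i, i.+1) \in tour_edges y) = (nx (bit n y) n i == i.+1).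
  apply: iff_eqb; rewrite (edges_char n2 py hpq hqn); split.
  - by case=> [[e1 _]|->]; [move: i1; rewrite e1 | rewrite eqxx].
  - by move/eqP => ->; right.
move: e; rewrite ex ey !nx_succ // hx.
by case: (bit n x i.+1); case: (bit n y i.+1); case: (bit n y i).
Qed.

Section RS_QE.
Local Open Scope ring_scope.
Lemma sum_lt (R : numDomainType) (r : seq (nat * nat)) (F G : nat * nat -> R) :
  (forall e, e \in r -> F e <= G e) -> (exists2 e, e \in r & F e < G e) ->
  \sum_(e <- r) F e < \sum_(e <- r) G e.
Proof.
elim: r => [|a r IH] hle [e he hlt]; first by rewrite in_nil in he.
rewrite !big_cons.
have hr : forall e, e \in r -> F e <= G e by move=> e' h; apply: hle; rewrite in_cons h orbT.
have hsum : \sum_(e <- r) F e <= \sum_(e <- r) G e.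
  rewrite big_seq [X in _ <= X]big_seq; apply: ler_sum => i; exact: hr.
move: he; rewrite in_cons => /orP[/eqP ea|her].
- by subst e; apply: ltr_leD.
- apply: ler_ltD; first by apply: hle; rewrite mem_head.
  by apply: IH => //; exists e.
Qed.

End RS_QE.

Section RS_QF.
Local Open Scope ring_scope.

Lemma adj_of (R : realFieldType) n x y : (2 < n)%N -> pyramidal n x -> pyramidal n y ->
  (forall z, pyramidal n z ->
     (forall e, e \in Epairs n -> e \in tour_edges z -> (e \in tour_edges x) || (e \in tour_edges y)) ->
     same_tour n z x \/ same_tour n z y) ->
  pyr_adjacent R n x y.
Proof.
move=> n2 px py H.
pose c := fun e => if (e \in tour_edges x) && (e \in tour_edges y) then 1
                   else if (e \in tour_edges x) || (e \in tour_edges y) then 0 else - 1 : R.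
exists c; split.
- rewrite /dot; apply: eq_bigr => e _; rewrite /charvec /c.
  by case: (e \in tour_edges x); case: (e \in tour_edges y); rewrite /= ?mulr1n ?mulr0n ?mulr1 ?mulr0.
- move=> z pz nzx nzy.
  case: (boolP (has (fun e => (e \in tour_edges z) && ~~ ((e \in tour_edges x) || (e \in tour_edges y))) (Epairs n))).
  + case/hasP => e he /andP[hz hxy]; apply: sum_lt.
    * move=> e' _; rewrite /charvec /c.
      case: (e' \in tour_edges x); case: (e' \in tour_edges y); case: (e' \in tour_edges z);
        rewrite /= ?mulr1n ?mulr0n ?mulr1 ?mulr0; lra.
    * exists e => //; rewrite /charvec /c hz; move: hxy.
      case: (e \in tour_edges x); case: (e \in tour_edges y) => //= _.
      rewrite ?mulr1n ?mulr0n ?mulr1 ?mulr0; lra.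
  + move/hasPn => hn; exfalso.
    have hinc : forall e, e \in Epairs n -> e \in tour_edges z ->
        (e \in tour_edges x) || (e \in tour_edges y).
      by move=> e he hz; have := hn e he; rewrite hz /= negbK.
    by case: (H z pz hinc) => h; [apply: nzx | apply: nzy].
Qed.

Lemma nonadj (R : realFieldType) n x y z w :
  pyramidal n z -> pyramidal n w ->
  ~ same_tour n z x -> ~ same_tour n z y -> ~ same_tour n w x -> ~ same_tour n w y ->
  (forall e, e \in Epairs n ->
     ((e \in tour_edges z) + (e \in tour_edges w) = (e \in tour_edges x) + (e \in tour_edges y))%N) ->
  ~ pyr_adjacent R n x y.
Proof.
move=> pz pw zx zy wx wy heq [c [exy H]].
have hz := H z pz zx zy; have hw := H w pw wx wy.
have hs : dot n c z + dot n c w = dot n c x + dot n c y.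
  rewrite /dot -!big_split; apply: eq_big_seq => e he /=.
  by rewrite -!mulrDr /charvec -!natrD heq.
have : dot n c z + dot n c w < dot n c x + dot n c y.
  by apply: ltrD => //; rewrite -exy.
by rewrite hs ltxx.
Qed.

End RS_QF.

Definition CondT n x y : Prop :=
   ((exists k, [/\ 3 < k, k < n - 2,
                  code n x k = code n y k,
                  code n x k.+1 = code n y k.+1 &
                  code n x k != code n x k.+1] /\
              (exists i, [/\ 3 <= i, i < k & code n x i != code n y i]) /\
              (exists j, [/\ k.+1 < j, j <= n - 1 & code n x j != code n y j]))
    \/
    (exists k, [/\ 3 <= k, k < n - 2,
                  code n x k = code n y k.+1,
                  code n x k.+1 = code n y k &
                  code n x k != code n x k.+1] /\
              (exists j, [/\ k.+1 < j, j <= n - 1 & code n x j = code n y j]))).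

Definition Kc n (f g : nat -> bool) := exists k,
  [/\ 0 < k, k.+1 < n, f k != f k.+1 & g k != g k.+1] /\
  (exists2 i, 0 < i <= k & f i != g i) /\
  (exists2 j, k < j < n & f j (+) g j != f k.+1 (+) g k.+1).

Lemma codeE n s k : 1 < k -> code n s k = bit n s k.
Proof. by move=> hk; rewrite /bit; case: eqP => // e; move: hk; rewrite e. Qed.

Lemma Kc_Cond n x y : 3 < n -> Kc n (bit n x) (bit n y) -> CondT n x y.
Proof.
move=> n3 [k [[k0 kn fk gk] [[i hi fgi] [j hj fgj]]]].
have i2 : 2 < i.
  case: (ltnP 2 i) => // h; have [e|e] : i = 1 \/ i = 2 by lia2.
  + by move: fgi; rewrite e !bit1.
  + by move: fgi; rewrite e !bit2.
have jk : j != k.+1 by apply/eqP => e; move: fgj; rewrite e eqxx.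
have {}jk : k.+1 < j by rewrite ltn_neqAle eq_sym jk /=; lia2.
case: (eqVneq (bit n x k) (bit n y k)) => ek.
- left; exists k.
  have ik : i != k by apply/eqP => e; move: fgi; rewrite e ek eqxx.
  have {}ik : i < k by rewrite ltn_neqAle ik /=; lia2.
  have e1 : bit n x k.+1 = bit n y k.+1.
    by move: fk gk ek; case: (bit n x k); case: (bit n x k.+1); case: (bit n y k); case: (bit n y k.+1).
  split; first by split; rewrite ?codeE //; lia2.
  split; first by exists i; split; rewrite ?codeE //; lia2.
  exists j; split; rewrite ?codeE //; try lia2.
  by move: fgj; rewrite e1; case: (bit n x j); case: (bit n y j); case: (bit n y k.+1).
- right; exists k.
  have e1 : bit n x k = bit n y k.+1.
    by move: fk gk ek; case: (bit n x k); case: (bit n x k.+1); case: (bit n y k); case: (bit n y k.+1).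
  have e2 : bit n x k.+1 = bit n y k.+1 (+) true.
    by move: fk gk ek; case: (bit n x k); case: (bit n x k.+1); case: (bit n y k); case: (bit n y k.+1).
  have e3 : bit n x k.+1 = bit n y k.
    by move: fk gk ek; case: (bit n x k); case: (bit n x k.+1); case: (bit n y k); case: (bit n y k.+1).
  have k2 : 2 < k by lia2.
  split; first by split; rewrite ?codeE //; lia2.
  exists j; split; rewrite ?codeE //; try lia2.
  by move: fgj; rewrite e2; case: (bit n x j); case: (bit n y j); case: (bit n y k.+1).
Qed.

Lemma Cond_Kc n x y : 3 < n -> CondT n x y -> Kc n (bit n x) (bit n y).
Proof.
move=> n3 [[k [[k3 kn e1 e2 ne] [[i [i3 ik fi]] [j [jk jn fj]]]]]|[k [[k3 kn e1 e2 ne] [j [jk jn fj]]]]].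
- move: e1 e2 ne fi fj; rewrite !codeE; try lia2 => e1 e2 ne fi fj.
  exists k; split; first by split; [lia2 | lia2 | | rewrite -e1 -e2].
  split; first by exists i => //; lia2.
  exists j; first lia2.
  by move: fj; rewrite e2; case: (bit n x j); case: (bit n y j); case: (bit n y k.+1).
- move: e1 e2 ne fj; rewrite !codeE; try lia2 => e1 e2 ne fj.
  exists k; split; first by split; [lia2 | lia2 | | rewrite -e1 -e2 eq_sym].
  split; first by exists k; [lia2 | rewrite -e2].
  exists j; first lia2.
  by rewrite fj e2; move: ne; rewrite e1 e2; case: (bit n y j); case: (bit n y k); case: (bit n y k.+1).
Qed.

Lemma edges_charb n s p q : 2 < n -> pyramidal n s -> 0 < p < q -> q <= n ->
  ((p,q) \in tour_edges s) = ((p == 1) && (q == 2)) || (q == nx (bit n s) n p).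
Proof.
move=> n2 ps hpq hqn; apply: iff_eqb; rewrite (edges_char n2 ps hpq hqn); split.
- by case=> [[-> ->]|->]; rewrite ?eqxx ?orbT.
- by case/orP => [/andP[/eqP -> /eqP ->]|/eqP ->]; [left | right].
Qed.

Lemma nonadj_of_Kc (R : realFieldType) n x y : 2 < n -> pyramidal n x -> pyramidal n y ->
  Kc n (bit n x) (bit n y) -> ~ pyr_adjacent R n x y.
Proof.
move=> n2 px py [k [[k0 kn fk gk] [[i hi fgi] [j hj fgj]]]].
have i2 : 2 < i.
  case: (ltnP 2 i) => // h; have [e|e] : i = 1 \/ i = 2 by lia2.
  + by move: fgi; rewrite e !bit1.
  + by move: fgi; rewrite e !bit2.
have k2 : 1 < k by lia2.
have d : bit n x k (+) bit n y k = bit n x k.+1 (+) bit n y k.+1.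
  by move: fk gk; case: (bit n x k); case: (bit n x k.+1); case: (bit n y k); case: (bit n y k.+1).
have s2 : forall f g, f 2 = true -> splice f g k 2 = true.
  by move=> f g h; rewrite /splice; have -> : 2 <= k by lia2.
have [z [pz cz]] := exists_tour n2 (s2 (bit n x) (bit n y) (bit2 n x)).
have [w [pw cw]] := exists_tour n2 (s2 (bit n y) (bit n x) (bit2 n y)).
have bz : forall t, 0 < t < n -> bit n z t = splice (bit n x) (bit n y) k t.
  move=> t ht; case: (eqVneq t 1) => [->|t1].
  - by rewrite /splice bit1; have -> : 1 <= k by lia2.
  - have t2 : 1 < t by move: t1 ht; clear; move/eqP; lia.
    rewrite -cz; last lia2. by rewrite /bit (negbTE t1).
have bw : forall t, 0 < t < n -> bit n w t = splice (bit n y) (bit n x) k t.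
  move=> t ht; case: (eqVneq t 1) => [->|t1].
  - by rewrite /splice bit1; have -> : 1 <= k by lia2.
  - have t2 : 1 < t by move: t1 ht; clear; move/eqP; lia.
    rewrite -cw; last lia2. by rewrite /bit (negbTE t1).
have nz : forall p, 0 < p < n -> nx (bit n z) n p = if p < k then nx (bit n x) n p else nx (bit n y) n p.
  move=> p hp; rewrite -nx_splice //; last lia2.
  apply: (@nx_ext (splice (bit n x) (bit n y) k) (bit n z) n p false); first lia2.
  by move=> t ht; rewrite addbF bz //; lia2.
have nw : forall p, 0 < p < n -> nx (bit n w) n p = if p < k then nx (bit n y) n p else nx (bit n x) n p.
  move=> p hp; rewrite -nx_splice //; last lia2.
  apply: (@nx_ext (splice (bit n y) (bit n x) k) (bit n w) n p false); first lia2.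
  by move=> t ht; rewrite addbF bw //; lia2.
have jk : k < j by lia2.
have ik : i <= k by lia2.
apply: (@nonadj R n x y z w) => //.
- move/(same_bits n2 pz px) => hs; have := hs j (ltac:(lia2)).
  rewrite bz; last lia2.
  rewrite /splice leqNgt jk /= d; move: fgj.
  by case: (bit n x j); case: (bit n y j); case: (bit n x k.+1 (+) bit n y k.+1).
- move/(same_bits n2 pz py) => hs; have := hs i (ltac:(lia2)).
  rewrite bz; last lia2.
  by rewrite /splice ik => e; move: fgi; rewrite e eqxx.
- move/(same_bits n2 pw px) => hs; have := hs i (ltac:(lia2)).
  rewrite bw; last lia2.
  by rewrite /splice ik => e; move: fgi; rewrite e eqxx.
- move/(same_bits n2 pw py) => hs; have := hs j (ltac:(lia2)).
  rewrite bw; last lia2.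
  rewrite /splice leqNgt jk /= [bit n y k (+) _]addbC d; move: fgj.
  by case: (bit n x j); case: (bit n y j); case: (bit n x k.+1 (+) bit n y k.+1).
- move=> [p q]; rewrite mem_Epairs /= => /and3P[hp hpq hqn].
  have hpq' : 0 < p < q by lia2.
  rewrite !(@edges_charb n _ p q n2 _ hpq' hqn) // nz ?nw; try lia2.
  case: ((p == 1) && (q == 2)) => //=.
  by case: (p < k) => //; rewrite addnC.
Qed.


Lemma adj_of_notKc (R : realFieldType) n x y : 2 < n -> pyramidal n x -> pyramidal n y ->
  ~ Kc n (bit n x) (bit n y) -> pyr_adjacent R n x y.
Proof.
move=> n2 px py nK; apply: adj_of => // z pz hinc.
case: (classic (same_tour n z x)) => [?|zx]; first by left.
case: (classic (same_tour n z y)) => [?|zy]; first by right.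
exfalso; apply: nK.
have dif : forall v, pyramidal n v -> ~ same_tour n z v ->
    exists2 i, 0 < i < n & bit n z i != bit n v i.
  move=> v pv zv; case: (classic (exists2 i, 0 < i < n & bit n z i != bit n v i)) => // nex.
  exfalso; apply: zv; apply: bits_same => // i hi.
  case: (eqVneq (bit n z i) (bit n v i)) => // hne.
  by exfalso; apply: nex; exists i.
apply: (@core n (bit n x) (bit n y) (bit n z)); rewrite ?bit1 ?bit2 //; last first.
- exact: dif.
- exact: dif.
move=> i i0 hi.
have hin : i < n by lia2.
have hq : 0 < i < nx (bit n z) n i by rewrite i0 nx_gt.
have hqn := nx_le (bit n z) hin.
have he : (i, nx (bit n z) n i) \in Epairs n by rewrite mem_Epairs /= i0 nx_gt hqn.
have hz : (i, nx (bit n z) n i) \in tour_edges z by rewrite (@edges_charb n z _ _ n2 pz hq hqn) eqxx orbT.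
have n12 : ~~ ((i == 1) && (nx (bit n z) n i == 2)).
  apply/negP => /andP[/eqP e1 /eqP e2]; subst i.
  by have := @nx_succ (bit n z) n 1 (ltac:(lia2)); rewrite e2 eqxx bit2 bit1.
case/orP: (hinc _ he hz) => h; [left; move: h; rewrite (@edges_charb n x _ _ n2 px hq hqn)
  | right; move: h; rewrite (@edges_charb n y _ _ n2 py hq hqn)]; by rewrite (negbTE n12) => /eqP.
Qed.

Theorem theorem3 (R : realFieldType) (n : nat) (x y : seq nat) :
  4 <= n ->
  pyramidal n x -> pyramidal n y -> ~ same_tour n x y ->
  (~ pyr_adjacent R n x y <->
   ((exists k, [/\ 3 < k, k < n - 2,
                  code n x k = code n y k,
                  code n x k.+1 = code n y k.+1 &
                  code n x k != code n x k.+1] /\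
              (exists i, [/\ 3 <= i, i < k & code n x i != code n y i]) /\
              (exists j, [/\ k.+1 < j, j <= n - 1 & code n x j != code n y j]))
    \/
    (exists k, [/\ 3 <= k, k < n - 2,
                  code n x k = code n y k.+1,
                  code n x k.+1 = code n y k &
                  code n x k != code n x k.+1] /\
              (exists j, [/\ k.+1 < j, j <= n - 1 & code n x j = code n y j])))).
Proof.
move=> n4 px py _; change (~ pyr_adjacent R n x y <-> CondT n x y).
have n2 : 2 < n by lia.
split.
- move=> nadj; apply: Kc_Cond; first lia.
  case: (classic (Kc n (bit n x) (bit n y))) => // nK; exfalso; apply: nadj.
  exact: adj_of_notKc.
- move=> hc; apply: nonadj_of_Kc => //; apply: Cond_Kc => //; lia.
Qed.
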